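(* Assume $F\succeq0$, and for $k\ge1$ let $X_k:=V_kT_k^{-1}V_k^*$ (with $X_0:=0$). Then for every $k\ge1$ there exists $\ell\in\mathbb C^k$ with nonzero last entry such that $X_k-X_{k-1}=V_k\ell\ell^*V_k^*$. Consequently $X_k-X_{k-1}$ has rank at most one (rank exactly one if $V_k$ has full column rank), and $X_k\succeq X_{k-1}$.
   Context: Let $A\in\mathbb C^{n\times n}$, let $C\in\mathbb C^{1\times n}$, and let $F\in\mathbb C^{n\times n}$ be Hermitian; $M^*$ denotes the conjugate transpose, $\succeq0$ denotes Hermitian positive semidefinite, and $X\succeq Y$ means $X-Y\succeq0$. Let $\alpha_1,\alpha_2,\dots\in\mathbb C$ be pairwise distinct with $\operatorname{Re}(\alpha_j)>0$ and $-A^*+\alpha_jI$ nonsingular. Set $$V_k=\big[(-A^*+\alpha_1I)^{-1}C^*,\dots,(-A^*+\alpha_kI)^{-1}C^*\big]\in\mathbb C^{n\times k},$$ and let $T_k\in\mathbb C^{k\times k}$ be the Hermitian matrix with entries $T_k(i,j)=\dfrac{1+(V_k^*FV_k)_{ij}}{\bar\alpha_i+\alpha_j}$, i.e. the unique solution of $\Lambda_k^*T+T\Lambda_k=V_k^*FV_k+\mathbf 1\mathbf 1^*$, where $\Lambda_k=\operatorname{diag}(\alpha_1,\dots,\alpha_k)$ and $\mathbf 1=[1,\dots,1]^T$. Under these assumptions $T_k$ is Hermitian positive definite and $T_{k-1}$ is its leading principal $(k-1)\times(k-1)$ submatrix. *)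

(* Defs.v *)
(* The complex field C is modelled by an arbitrary
   numClosedFieldType C (algebraically closed field with conjugation ^*
   and the partial order 0 <= z <-> z real nonnegative); this covers C. *)
From HB Require Import structures.
From mathcomp Require Import all_boot all_order all_algebra.
From mathcomp Require Export sesquilinear spectral.
Set Implicit Arguments. Unset Strict Implicit. Unset Printing Implicit Defensive.
Import Order.TTheory GRing.Theory Num.Theory.
Local Open Scope ring_scope.
Local Open Scope sesquilinear_scope.

Section Defs.
Variable C : numClosedFieldType.

Definition ctr m n (M : 'M[C]_(m, n)) : 'M[C]_(n, m) := M ^t*.

Definition psdmx n (M : 'M[C]_n) : Prop :=
  ctr M = M /\ forall v : 'cV[C]_n, 0 <= (ctr v *m M *m v) 0 0.

(* alpha : nat -> C, with alpha j = alpha_{j+1} of the paper (0-based). *)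
Definition Vk n (A : 'M[C]_n) (Cr : 'M[C]_(1, n)) (alpha : nat -> C) (k : nat)
  : 'M[C]_(n, k) :=
  \matrix_(i < n, j < k)
     ((invmx (- ctr A + (alpha j)%:M) *m ctr Cr) i 0).

Definition Tk n (A : 'M[C]_n) (Cr : 'M[C]_(1, n)) (F : 'M[C]_n)
  (alpha : nat -> C) (k : nat) : 'M[C]_k :=
  let V := Vk A Cr alpha k in
  \matrix_(i < k, j < k)
     ((1 + (ctr V *m F *m V) i j) / ((alpha i)^* + alpha j)).

Definition Xk n (A : 'M[C]_n) (Cr : 'M[C]_(1, n)) (F : 'M[C]_n)
  (alpha : nat -> C) (k : nat) : 'M[C]_n :=
  match k with
  | 0 => 0
  | _ => Vk A Cr alpha k *m invmx (Tk A Cr F alpha k) *m ctr (Vk A Cr alpha k)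
  end.
End Defs.

(* Main.v *)
Require Import Defs.
From HB Require Import structures.
From mathcomp Require Import all_boot all_order all_algebra.
From mathcomp Require Import ring.
Set Implicit Arguments. Unset Strict Implicit. Unset Printing Implicit Defensive.
Import Order.TTheory GRing.Theory Num.Theory.
Local Open Scope ring_scope.
Local Open Scope sesquilinear_scope.

Lemma ctrE (C : numClosedFieldType) m n (M : 'M[C]_(m,n)) i j : ctr M i j = (M j i)^*.
Proof. by rewrite /ctr !mxE. Qed.

Lemma ctrK (C : numClosedFieldType) m n (M : 'M[C]_(m,n)) : ctr (ctr M) = M.
Proof. by apply/matrixP=> i j; rewrite !ctrE conjCK. Qed.

Lemma ctrM (C : numClosedFieldType) m n p (A : 'M[C]_(m,n)) (B : 'M[C]_(n,p)) :
  ctr (A *m B) = ctr B *m ctr A.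
Proof.
apply/matrixP=> i j; rewrite !(ctrE, mxE) rmorph_sum; apply: eq_bigr => k _.
by rewrite !ctrE rmorphM mulrC.
Qed.

Lemma ctrD (C : numClosedFieldType) m n (A B : 'M[C]_(m,n)) : ctr (A + B) = ctr A + ctr B.
Proof. by apply/matrixP=> i j; rewrite !(ctrE, mxE) rmorphD. Qed.

Lemma ctrN (C : numClosedFieldType) m n (A : 'M[C]_(m,n)) : ctr (- A) = - ctr A.
Proof. by apply/matrixP=> i j; rewrite !(ctrE, mxE) rmorphN. Qed.

Lemma ctrZ (C : numClosedFieldType) m n (a : C) (A : 'M[C]_(m,n)) : ctr (a *: A) = a^* *: ctr A.
Proof. by apply/matrixP=> i j; rewrite !(ctrE, mxE) rmorphM. Qed.

Lemma ctr1 (C : numClosedFieldType) n : ctr (1%:M : 'M[C]_n) = 1%:M.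
Proof. by apply/matrixP=> i j; rewrite !(ctrE, mxE) rmorph_nat eq_sym. Qed.

Lemma ctr0 (C : numClosedFieldType) m n : ctr (0 : 'M[C]_(m,n)) = 0.
Proof. by apply/matrixP=> i j; rewrite !(ctrE, mxE) conjC0. Qed.

Lemma norm_vec (C : numClosedFieldType) n (y : 'cV[C]_n) :
  (ctr y *m y) 0 0 = \sum_i `|y i 0| ^+ 2.
Proof. by rewrite mxE; apply: eq_bigr => i _; rewrite ctrE normCKC. Qed.

Lemma norm_vec_ge0 (C : numClosedFieldType) n (y : 'cV[C]_n) : 0 <= (ctr y *m y) 0 0.
Proof. by rewrite norm_vec sumr_ge0 // => i _; rewrite exprn_ge0. Qed.

Lemma norm_vec_eq0 (C : numClosedFieldType) n (y : 'cV[C]_n) :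
  (ctr y *m y) 0 0 = 0 -> y = 0.
Proof.
rewrite norm_vec => /psumr_eq0P H; apply/matrixP=> i j; rewrite ord1 mxE.
have := H (fun _ _ => exprn_ge0 _ (normr_ge0 _)) i isT.
by move/eqP; rewrite expf_eq0 /= normr_eq0 => /eqP.
Qed.

Lemma herm_spec (C : numClosedFieldType) n (H : 'M[C]_n) : ctr H = H ->
  exists (P : 'M[C]_n) (d : 'rV[C]_n),
   [/\ P *m ctr P = 1%:M, ctr P *m P = 1%:M, H = ctr P *m diag_mx d *m P
     & forall i, (d 0 i)^* = d 0 i].
Proof.
move=> Hh.
have Hs : H \is hermsymmx by apply/is_hermitianmxP; rewrite expr0 scale1r.
have U := spectral_unitarymx H.
exists (spectralmx H), (spectral_diag H); split.
- exact/unitarymxP.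
- by rewrite /ctr -invmx_unitary // mulVmx // spectral_unit.
- by rewrite /ctr -invmx_unitary //; apply/orthomx_spectralP/hermitian_normalmx.
- move=> i; apply: conj_Creal.
  by have /mxOverP := hermitian_spectral_diag_real Hs; apply.
Qed.

Lemma quad_diag (C : numClosedFieldType) n (P : 'M[C]_n) d (y : 'cV[C]_n) :
  (ctr y *m (ctr P *m diag_mx d *m P) *m y) 0 0
   = \sum_i d 0 i * `|(P *m y) i 0| ^+ 2.
Proof.
rewrite !mulmxA -ctrM -!mulmxA mulmxA mxE; apply: eq_bigr => i _.
by rewrite mul_mx_diag !mxE normCKC mulrCA mulrA.
Qed.

Definition evec (C : numClosedFieldType) n (i : 'I_n) : 'cV[C]_n :=
  \col_j (j == i)%:R.

Lemma diag_evec (C : numClosedFieldType) n (d : 'rV[C]_n) i :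
  diag_mx d *m evec C i = d 0 i *: evec C i.
Proof.
apply/matrixP=> j k; rewrite mul_diag_mx !mxE.
by case: eqP => [->|_]; rewrite ?mulr1 ?mulr0.
Qed.

Lemma evec_neq0 (C : numClosedFieldType) n (i : 'I_n) : evec C i != 0.
Proof. by apply/negP=> /eqP/matrixP/(_ i 0); rewrite !mxE eqxx => /eqP; rewrite oner_eq0. Qed.

Lemma psd_decomp (C : numClosedFieldType) n (F : 'M[C]_n) : psdmx F ->
  exists (P : 'M[C]_n) (d : 'rV[C]_n),
   [/\ P *m ctr P = 1%:M, ctr P *m P = 1%:M, F = ctr P *m diag_mx d *m P
     & forall i, 0 <= d 0 i].
Proof.
move=> [Fh Fp]; have [P [d [P1 P2 FE dr]]] := herm_spec Fh.
exists P, d; split => // i.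
have := Fp (ctr P *m evec C i); rewrite FE quad_diag mulmxA P1 mul1mx.
rewrite (bigD1 i) //= big1 ?addr0; last first.
  by move=> j /negbTE ji; rewrite mxE ji normr0 expr0n mulr0.
by rewrite mxE eqxx normr1 expr1n mulr1.
Qed.

Lemma psd_zero (C : numClosedFieldType) n (F : 'M[C]_n) (y : 'cV[C]_n) : psdmx F ->
  (ctr y *m F *m y) 0 0 = 0 -> F *m y = 0.
Proof.
move=> /psd_decomp [P [d [P1 P2 FE dp]]]; rewrite FE quad_diag => /psumr_eq0P H.
have {}H := H (fun i _ => mulr_ge0 (dp i) (exprn_ge0 _ (normr_ge0 _))).
suff Z : diag_mx d *m (P *m y) = 0 by rewrite -!mulmxA Z mulmx0.
apply/matrixP=> i j; rewrite ord1 mul_diag_mx [RHS]mxE.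
have /eqP := H i isT; rewrite mulf_eq0 expf_eq0 /= normr_eq0 => /orP[]/eqP Z.
  by rewrite mxE Z mul0r. by rewrite mxE Z mulr0.
Qed.

Lemma vander_zero (C : numClosedFieldType) K (a : 'I_K -> C) (x : 'cV[C]_K) :
  injective a -> (forall k, \sum_i a i ^+ k * x i 0 = 0) -> x = 0.
Proof.
move=> ainj H; apply/matrixP => i0 j; rewrite ord1 mxE.
pose p := \prod_(j | j != i0) ('X - (a j)%:P).
have S : \sum_i p.[a i] * x i 0 = 0.
  under eq_bigr do rewrite horner_coef mulr_suml.
  rewrite exchange_big big1 // => l _.
  transitivity (p`_l * \sum_i a i ^+ l * x i 0); last by rewrite H mulr0.
  rewrite mulr_sumr; apply: eq_bigr => i _; by rewrite mulrA.
rewrite (bigD1 i0) //= big1 ?addr0 in S; last first.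
  move=> i ii0; rewrite /p horner_prod (bigD1 i) //= hornerXsubC subrr mul0r mul0r //.
move/eqP: S; rewrite mulf_eq0 => /orP[|/eqP//].
rewrite /p horner_prod prodf_seq_eq0 => /hasP[k /= _ /andP[ki0]].
rewrite hornerXsubC subr_eq0 => /eqP/ainj E; by rewrite E eqxx in ki0.
Qed.

Definition Dg (C : numClosedFieldType) K (a : 'I_K -> C) : 'M[C]_K := diag_mx (\row_i a i).

Lemma lyap_ker (C : numClosedFieldType) K (T G : 'M[C]_K) (a : 'I_K -> C) :
  ctr T = T -> injective a ->
  G = ctr (Dg a) *m T + T *m Dg a ->
  (forall x : 'cV_K, (ctr x *m G *m x) 0 0 = 0 -> G *m x = 0 /\ \sum_i x i 0 = 0) ->
  forall x : 'cV_K, T *m x = 0 -> x = 0.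
Proof.
move=> Th ainj GE Gz x Tx.
have step : forall y : 'cV_K, T *m y = 0 -> T *m (Dg a *m y) = 0 /\ \sum_i y i 0 = 0.
  move=> y Ty.
  have q : (ctr y *m G *m y) 0 0 = 0.
    rewrite GE mulmxDr mulmxDl -!mulmxA Ty !mulmx0 add0r mulmxA.
    by rewrite -{1}Th -ctrM Ty ctr0 mul0mx mxE.
  have [Gy sy] := Gz y q; split => //.
  by move: Gy; rewrite GE mulmxDl -mulmxA Ty mulmx0 add0r -mulmxA.
have It : forall k, T *m iter k (mulmx (Dg a)) x = 0.
  by elim=> [|k IH] //=; case: (step _ IH).
have Ie : forall k i, iter k (mulmx (Dg a)) x i 0 = a i ^+ k * x i 0.
  elim=> [|k IH] i /=; first by rewrite expr0 mul1r.
  by rewrite mul_diag_mx !mxE IH exprS mulrA.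
apply: (vander_zero ainj) => k.
have [_ s] := step _ (It k).
by rewrite -[RHS]s; apply: eq_bigr => i _; rewrite Ie.
Qed.

Lemma lyap_pd (C : numClosedFieldType) K (T G : 'M[C]_K) (a : 'I_K -> C) :
  ctr T = T -> injective a -> (forall i, 0 < 'Re (a i)) ->
  G = ctr (Dg a) *m T + T *m Dg a ->
  (forall x : 'cV_K, 0 <= (ctr x *m G *m x) 0 0) ->
  (forall x : 'cV_K, (ctr x *m G *m x) 0 0 = 0 -> G *m x = 0 /\ \sum_i x i 0 = 0) ->
  forall x : 'cV_K, x != 0 -> 0 < (ctr x *m T *m x) 0 0.
Proof.
move=> Th ainj Hre GE Gp Gz.
have [P [d [P1 P2 TE dr]]] := herm_spec Th.
have ker := lyap_ker Th ainj GE Gz.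
have dpos : forall i, 0 < d 0 i.
  move=> i; set u := ctr P *m evec C i.
  have Tu : T *m u = d 0 i *: u.
    rewrite TE -!mulmxA [P *m (ctr P *m _)]mulmxA P1 mul1mx diag_evec.
    by rewrite scalemxAr.
  have u0 : u != 0.
    apply/negP => /eqP u0; move: (evec_neq0 C i).
    by rewrite -(mul1mx (evec C i)) -P1 -mulmxA -/u u0 mulmx0 eqxx.
  have S : 0 < \sum_j (a j + (a j)^*) * `|u j 0| ^+ 2.
    have tge : forall j, true -> 0 <= (a j + (a j)^*) * `|u j 0| ^+ 2.
      move=> j _; apply: mulr_ge0; last exact: exprn_ge0.
      have := Hre j; rewrite ReE => /ltW.
      by rewrite pmulr_lge0 // invr_gt0 ltr0n.
    rewrite lt_def sumr_ge0 // andbT; apply/negP => /eqP /psumr_eq0P - /(_ tge) H.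
    move/negP: u0; apply; apply/eqP/matrixP => j k; rewrite ord1 [RHS]mxE.
    have /eqP := H j isT; rewrite mulf_eq0 expf_eq0 /= normr_eq0 => /orP[|/eqP//].
    have := Hre j; rewrite ReE => /gt_eqF; rewrite mulf_eq0 => /negbT.
    by rewrite negb_or => /andP[/negbTE-> _].
  have Q : (ctr u *m G *m u) 0 0 = d 0 i * \sum_j (a j + (a j)^*) * `|u j 0| ^+ 2.
    rewrite GE mulmxDr mulmxDl -!mulmxA Tu mulmxA -ctrM.
    rewrite [ctr u *m (T *m _)]mulmxA -[in ctr u *m T]Th -ctrM Tu ctrZ dr.
    rewrite -scalemxAr -scalemxAl !mxE -mulrDr -big_split /=; congr (_ * _).
    apply: eq_bigr => j _.
    rewrite !ctrE mul_diag_mx !mxE normCKC rmorphM; ring.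
  rewrite lt_def; apply/andP; split.
    apply/negP => /eqP d0; move/negP: u0; apply; apply/eqP/ker.
    by rewrite Tu d0 scale0r.
  by have := Gp u; rewrite Q pmulr_lge0.
move=> x x0; rewrite TE quad_diag.
have z0 : P *m x != 0.
  apply/negP=> /eqP z0; move/negP: x0; apply; apply/eqP.
  by rewrite -(mul1mx x) -P2 -mulmxA z0 mulmx0.
have tge : forall j, true -> 0 <= d 0 j * `|(P *m x) j 0| ^+ 2.
  by move=> j _; apply: mulr_ge0; [exact: ltW | exact: exprn_ge0].
rewrite lt_def sumr_ge0 // andbT; apply/negP => /eqP /psumr_eq0P - /(_ tge) H.
move/negP: z0; apply; apply/eqP/matrixP => j k; rewrite ord1 [RHS]mxE.
have /eqP := H j isT; rewrite mulf_eq0 (gt_eqF (dpos j)) expf_eq0 /= normr_eq0.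
by move/eqP.
Qed.

Lemma ctr_inv (C : numClosedFieldType) n (A : 'M[C]_n) : ctr (invmx A) = invmx (ctr A).
Proof. by rewrite /ctr trmx_inv map_invmx. Qed.

Lemma schur_inv (C : numClosedFieldType) k m (T : 'M[C]_k) (E : 'M_(k,m)) (e : 'cV_k)
  (T' : 'M_m) (w : 'cV_k) (s : C) :
  ctr T = T -> ctr E *m E = 1%:M -> ctr E *m e = 0 -> ctr e *m e = 1%:M ->
  E *m ctr E + e *m ctr e = 1%:M ->
  T' = ctr E *m T *m E -> T' \in unitmx ->
  w = e - E *m invmx T' *m ctr E *m T *m e ->
  s = (ctr w *m T *m w) 0 0 ->
  s != 0 ->
  invmx T = E *m invmx T' *m ctr E + s^-1 *: (w *m ctr w).
Proof.
move=> Th EE Ee ee Id HT' Tu Hw Hs s0.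
have EtTw : ctr E *m T *m w = 0.
  by rewrite Hw mulmxBr !mulmxA -HT' mulmxV // mul1mx subrr.
have Tw1 : T *m w = e *m (ctr e *m T *m w).
  by rewrite -[T *m w]mul1mx -Id mulmxDl -!mulmxA (mulmxA (ctr E)) EtTw mulmx0 add0r.
have ew : ctr e *m w = 1%:M.
  rewrite Hw mulmxBr ee -!mulmxA (mulmxA (ctr e) E).
  by rewrite -[ctr e *m E]ctrK ctrM ctrK Ee ctr0 mul0mx subr0.
have es : ctr e *m T *m w = s%:M.
  have we : ctr w *m e = 1%:M by rewrite -[e]ctrK -ctrM ew ctr1.
  rewrite Hs -[in RHS]mulmxA [in RHS]Tw1 mulmxA we mul1mx.
  exact: mx11_scalar.
have Tw : T *m w = s *: e by rewrite Tw1 es mul_mx_scalar.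
have R1 : T *m (E *m invmx T' *m ctr E + s^-1 *: (w *m ctr w)) = 1%:M.
  rewrite mulmxDr -scalemxAr (mulmxA T w) Tw -scalemxAl scalerA mulVf // scale1r.
  rewrite -[T *m _]mul1mx -Id mulmxDl.
  have H1 : E *m ctr E *m (T *m (E *m invmx T' *m ctr E)) = E *m ctr E.
    have -> : E *m ctr E *m (T *m (E *m invmx T' *m ctr E)) =
              E *m (ctr E *m T *m E) *m invmx T' *m ctr E by rewrite !mulmxA.
    by rewrite -HT' -(mulmxA E T') mulmxV // mulmx1.
  have CT' : ctr T' = T' by rewrite HT' !ctrM ctrK Th mulmxA.
  have cw : ctr w = ctr e - ctr e *m T *m E *m invmx T' *m ctr E.
    by rewrite Hw ctrD ctrN !ctrM ctrK Th ctr_inv CT' !mulmxA.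
  rewrite H1 -addrA; congr (_ + _).
  by rewrite cw mulmxBr !mulmxA addrC subrK.
have [Tu' _] := mulmx1_unit R1.
by rewrite -[invmx T]mulmx1 -R1 mulKmx.
Qed.

Definition Emb (C : numClosedFieldType) m : 'M[C]_(m.+1, m) :=
  \matrix_(i, j) (i == lift ord_max j)%:R.

Lemma mulEmb (C : numClosedFieldType) p m (A : 'M[C]_(p, m.+1)) i j :
  (A *m Emb C m) i j = A i (lift ord_max j).
Proof.
rewrite mxE (bigD1 (lift ord_max j)) //= big1 ?addr0; first by rewrite mxE eqxx mulr1.
by move=> k /negbTE kj; rewrite !mxE kj mulr0.
Qed.

Lemma Embmul (C : numClosedFieldType) p m (A : 'M[C]_(m.+1, p)) i j :
  (ctr (Emb C m) *m A) i j = A (lift ord_max i) j.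
Proof.
rewrite mxE (bigD1 (lift ord_max i)) //= big1 ?addr0.
  by rewrite ctrE mxE eqxx rmorph_nat mul1r.
by move=> k /negbTE kj; rewrite ctrE mxE kj rmorph_nat mul0r.
Qed.

Lemma EE (C : numClosedFieldType) m : ctr (Emb C m) *m Emb C m = 1%:M.
Proof.
apply/matrixP=> i j; rewrite Embmul !mxE.
by rewrite (inj_eq (@lift_inj _ ord_max)).
Qed.

Lemma Ee (C : numClosedFieldType) m : ctr (Emb C m) *m evec C ord_max = 0.
Proof.
by apply/matrixP=> i j; rewrite Embmul !mxE eq_sym (negbTE (neq_lift _ _)).
Qed.

Lemma ee (C : numClosedFieldType) m : ctr (evec C (@ord_max m)) *m evec C ord_max = 1%:M.
Proof.
apply/matrixP=> i j; rewrite !ord1 !mxE (bigD1 ord_max) //= big1 ?addr0.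
  by rewrite ctrE !mxE eqxx rmorph_nat mulr1.
by move=> k /negbTE kj; rewrite !mxE kj mulr0.
Qed.

Lemma EId (C : numClosedFieldType) m :
  Emb C m *m ctr (Emb C m) + evec C ord_max *m ctr (evec C ord_max) = 1%:M.
Proof.
apply/matrixP=> i k; rewrite !mxE big_ord1 !ctrE !mxE rmorph_nat.
have -> : \sum_j Emb C m i j * ctr (Emb C m) j k = ((i == k) && (i != ord_max))%:R.
  case: (unliftP ord_max i) => [j0 ->|->].
    rewrite (bigD1 j0) //= big1 ?addr0.
      have -> : (lift ord_max j0 != ord_max) = true by rewrite eq_sym neq_lift.
      by rewrite ctrE !mxE eqxx rmorph_nat mul1r andbT eq_sym.
    by move=> j /negbTE jj; rewrite mxE (inj_eq (@lift_inj _ ord_max)) eq_sym jj mul0r.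
  rewrite big1 ?eqxx ?andbF // => j _.
  by rewrite mxE (negbTE (neq_lift _ _)) mul0r.
have [->|ik] := eqVneq i k.
  by case: (k == ord_max); rewrite /= ?(mulr1n, mulr0n, mulr1, mulr0, addr0, add0r).
case/boolP: (i == ord_max) => [/eqP iE|_].
  by move: ik; rewrite iE eq_sym => /negbTE ->; rewrite /= ?(mulr1n, mulr0n, mulr1, mulr0, addr0, add0r).
by rewrite /= ?(mulr1n, mulr0n, mulr1, mulr0, mul0r, addr0, add0r).
Qed.

Lemma Vk_emb (C : numClosedFieldType) n (A : 'M[C]_n) Cr alpha m :
  Vk A Cr alpha m = Vk A Cr alpha m.+1 *m Emb C m.
Proof. by apply/matrixP=> i j; rewrite mulEmb !mxE lift_max. Qed.

Lemma Tk_emb (C : numClosedFieldType) n (A : 'M[C]_n) Cr F alpha m :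
  Tk A Cr F alpha m = ctr (Emb C m) *m Tk A Cr F alpha m.+1 *m Emb C m.
Proof.
apply/matrixP=> i j; rewrite mulEmb Embmul [LHS]mxE [RHS]mxE Vk_emb !ctrM.
have -> : ctr (Emb C m) *m ctr (Vk A Cr alpha m.+1) *m F *m
    (Vk A Cr alpha m.+1 *m Emb C m) =
    ctr (Emb C m) *m (ctr (Vk A Cr alpha m.+1) *m F *m Vk A Cr alpha m.+1) *m Emb C m.
  by rewrite !mulmxA.
by rewrite mulEmb Embmul !lift_max.
Qed.

Lemma Re_addC (C : numClosedFieldType) (a b : C) : 'Re (a^* + b) = 'Re a + 'Re b.
Proof. by rewrite !ReE rmorphD /= conjCK; field. Qed.

Lemma den_neq0 (C : numClosedFieldType) (a b : C) : 0 < 'Re a -> 0 < 'Re b -> a^* + b != 0.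
Proof.
move=> ha hb; apply/eqP => h.
have := Re_addC a b; rewrite h ReE conjC0 addr0 mul0r => /esym/eqP.
by rewrite (gt_eqF (addr_gt0 ha hb)).
Qed.

Lemma herm_quad (C : numClosedFieldType) n (F : 'M[C]_n) : psdmx F -> ctr F = F.
Proof. by case. Qed.

Lemma Tk_herm (C : numClosedFieldType) n (A : 'M[C]_n) Cr F alpha K :
  ctr F = F -> ctr (Tk A Cr F alpha K) = Tk A Cr F alpha K.
Proof.
move=> Fh; set V := Vk A Cr alpha K.
have Mh : ctr (ctr V *m F *m V) = ctr V *m F *m V by rewrite !ctrM ctrK Fh mulmxA.
apply/matrixP=> i j; rewrite ctrE [in LHS]mxE [in RHS]mxE -/V rmorphM fmorphV !rmorphD /= conjCK rmorph1.
by rewrite -(ctrE (ctr V *m F *m V)) Mh [alpha j + _]addrC.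
Qed.

Definition ones (C : numClosedFieldType) K : 'cV[C]_K := const_mx 1.

Definition Gk (C : numClosedFieldType) n (A : 'M[C]_n) Cr F alpha K : 'M[C]_K :=
  ctr (Vk A Cr alpha K) *m F *m Vk A Cr alpha K + ones C K *m ctr (ones C K).

Lemma ctr_Dg (C : numClosedFieldType) K (a : 'I_K -> C) :
  ctr (Dg a) = diag_mx (\row_i (a i)^*).
Proof.
apply/matrixP=> i j; rewrite ctrE !mxE rmorphMn eq_sym /=; by case: eqP => [->|].  
Qed.

Lemma Tk_lyap (C : numClosedFieldType) n (A : 'M[C]_n) Cr F alpha K :
  (forall j, 0 < 'Re (alpha j)) ->
  Gk A Cr F alpha K = ctr (Dg (fun i : 'I_K => alpha i)) *m Tk A Cr F alpha K
                      + Tk A Cr F alpha K *m Dg (fun i : 'I_K => alpha i).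
Proof.
move=> Hre; rewrite ctr_Dg /Dg mul_diag_mx mul_mx_diag.
apply/matrixP=> i j; rewrite !mxE big_ord1 ctrE !mxE rmorph1 mulr1.
have c0 := den_neq0 (Hre i) (Hre j).
move: c0; set M := \sum_j0 _; set x := (alpha i)^*; set y := alpha j => c0.
by field.
Qed.

Lemma Gk_quad (C : numClosedFieldType) n (A : 'M[C]_n) Cr F alpha K (x : 'cV_K) :
  (ctr x *m Gk A Cr F alpha K *m x) 0 0 =
  (ctr (Vk A Cr alpha K *m x) *m F *m (Vk A Cr alpha K *m x)) 0 0
  + (ctr (ctr (ones C K) *m x) *m (ctr (ones C K) *m x)) 0 0.
Proof.
by rewrite /Gk mulmxDr mulmxDl mxE; congr (_ + _); rewrite !ctrM ?ctrK !mulmxA.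
Qed.

Lemma sum_ones (C : numClosedFieldType) K (x : 'cV[C]_K) :
  (ctr (ones C K) *m x) 0 0 = \sum_i x i 0.
Proof. by rewrite mxE; apply: eq_bigr => i _; rewrite ctrE mxE conjC1 mul1r. Qed.

Lemma Tk_pd (C : numClosedFieldType) n (A : 'M[C]_n) Cr F alpha K :
  psdmx F -> injective alpha -> (forall j, 0 < 'Re (alpha j)) ->
  forall x : 'cV_K, x != 0 -> 0 < (ctr x *m Tk A Cr F alpha K *m x) 0 0.
Proof.
move=> HF Hdist Hre.
apply: (@lyap_pd _ _ _ (Gk A Cr F alpha K) (fun i : 'I_K => alpha i)).
- exact/Tk_herm/herm_quad.
- by move=> i j /Hdist /ord_inj.
- by move=> i; apply: Hre.
- exact: Tk_lyap.
- by move=> x; rewrite Gk_quad addr_ge0 ?norm_vec_ge0 //; case: HF => _; apply.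
- move=> x; rewrite Gk_quad => /eqP; rewrite paddr_eq0 ?norm_vec_ge0 //; last first.
    by case: HF => _; apply.
  case/andP => /eqP q1 /eqP q2.
  have F0 := psd_zero HF q1; have o0 := norm_vec_eq0 q2.
  split; last by rewrite -sum_ones o0 mxE.
  by rewrite /Gk mulmxDl -!mulmxA F0 o0 !mulmx0 addr0.
Qed.

Lemma pd_unit (C : numClosedFieldType) K (T : 'M[C]_K) :
  (forall x : 'cV_K, x != 0 -> 0 < (ctr x *m T *m x) 0 0) -> T \in unitmx.
Proof.
move=> Tp; rewrite -unitmx_tr -row_free_unit -kermx_eq0; apply/eqP/row_matrixP => i.
rewrite row0; have := mulmx_ker T^T; move/(congr1 (row i)); rewrite row_mul row0.
move/(congr1 trmx); rewrite trmx_mul trmxK trmx0 => H.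
apply/eqP; rewrite -trmx_eq0; apply/negPn/negP => /Tp.
by rewrite -mulmxA H mulmx0 mxE ltxx.
Qed.
Local Close Scope sesquilinear_scope.

Lemma XkE (C : numClosedFieldType) n (A : 'M[C]_n) Cr F alpha k :
  Xk A Cr F alpha k = Vk A Cr alpha k *m invmx (Tk A Cr F alpha k) *m ctr (Vk A Cr alpha k).
Proof. by case: k => [|k] //=; rewrite [Vk _ _ _ 0]thinmx0 !mul0mx. Qed.

Lemma rank1_psd (C : numClosedFieldType) n (u : 'cV[C]_n) : psdmx (u *m ctr u).
Proof.
split; first by rewrite ctrM ctrK.
move=> v; have -> : ctr v *m (u *m ctr u) *m v = ctr (ctr u *m v) *m (ctr u *m v).
  by rewrite ctrM ctrK !mulmxA.
exact: norm_vec_ge0.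
Qed.

Theorem theorem6p2 (C : numClosedFieldType) (n : nat)
  (A : 'M[C]_n) (Cr : 'M[C]_(1, n)) (F : 'M[C]_n) (alpha : nat -> C)
  (Hdist : injective alpha)
  (Hre : forall j, 0 < 'Re (alpha j))
  (Hinv : forall j, (- ctr A + (alpha j)%:M) \in unitmx)
  (HF : psdmx F) :
  forall m : nat,
    let V := Vk A Cr alpha m.+1 in
    let D := Xk A Cr F alpha m.+1 - Xk A Cr F alpha m in
    [/\ (exists l : 'cV[C]_(m.+1),
           l ord_max 0 != 0 /\ D = V *m l *m ctr l *m ctr V),
        (\rank D <= 1)%N,
        (\rank V = m.+1 -> \rank D = 1%N)
      & psdmx D].
Proof.
move=> m V D.
pose T := Tk A Cr F alpha m.+1; pose E := Emb C m; pose e := evec C (@ord_max m).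
have HT' : Tk A Cr F alpha m = ctr E *m T *m E := Tk_emb A Cr F alpha m.
have Tu' : Tk A Cr F alpha m \in unitmx by apply/pd_unit/Tk_pd.
pose w := e - E *m invmx (Tk A Cr F alpha m) *m ctr E *m T *m e.
pose s := (ctr w *m T *m w) 0 0.
have wl : w ord_max 0 = 1.
  rewrite /w -!mulmxA mxE [e _ _]mxE eqxx !mxE big1 ?oppr0 ?addr0 // => j _.
  by rewrite mxE (negbTE (neq_lift _ _)) mul0r.
have w0 : w != 0 by apply/negP => /eqP w0; move: wl; rewrite w0 mxE => /eqP; rewrite eq_sym oner_eq0.
have sp : 0 < s by apply: Tk_pd.
have s0 : s != 0 by rewrite gt_eqF.
have Inv := schur_inv (Tk_herm _ _ _ _ (herm_quad HF)) (EE C m) (Ee C m) (ee C m) (EId C m)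
   HT' Tu' erefl erefl s0.
have hD : D = s^-1 *: (V *m w *m ctr w *m ctr V).
  rewrite /D !XkE -/T Inv (Vk_emb A Cr alpha m) -/V ctrM.
  rewrite mulmxDr mulmxDl -scalemxAr -scalemxAl !mulmxA.
  by rewrite [X in X - _]addrC addrK.
pose c := sqrtC s^-1.
have sge : 0 <= s^-1 by rewrite invr_ge0 ltW.
have cc : c * c^* = s^-1 by rewrite conj_Creal ?sqrtC_real // -expr2 sqrtCK.
have c0 : c != 0 by rewrite sqrtC_eq0 invr_eq0.
pose l := c *: w.
have hD2 : D = V *m l *m ctr l *m ctr V.
  rewrite hD /l ctrZ -2![in RHS]scalemxAr -!scalemxAl scalerA mulrC cc.
  by [].
pose u := V *m l.
have Du : D = u *m ctr u by rewrite hD2 /u ctrM !mulmxA.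
have rk : (\rank D <= 1)%N by rewrite Du (leq_trans (mxrankM_maxl _ _)) // rank_leq_col.
split => //.
- exists l; split => //; by rewrite /l mxE wl mulr1.
- move=> rV; apply/eqP; rewrite eqn_leq rk lt0n mxrank_eq0 Du.
  have u0 : u != 0.
    apply/negP => /eqP u0.
    have : (l^T *m V^T == 0) by rewrite -trmx_mul -/u u0 trmx0.
    rewrite mulmx_free_eq0; last by rewrite /row_free mxrank_tr rV.
    rewrite trmx_eq0 => /eqP l0.
    have : l ord_max 0 = 0 by rewrite l0 mxE.
    by rewrite /l mxE wl mulr1 => /eqP; rewrite (negbTE c0).
  have [i ui] : exists i, u i 0 != 0.
    case: (pickP (fun i => u i 0 != 0)) => [i ui|H]; first by exists i.
    move/negP: u0; case; apply/eqP/matrixP => i j; rewrite ord1 [RHS]mxE.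
    by have := H i; move=> /= /negbFE /eqP.
  apply/negP => /eqP/matrixP/(_ i i); rewrite !mxE big_ord1 ctrE => /eqP.
  by rewrite mulf_eq0 conjC_eq0 orbb (negbTE ui).
- by rewrite Du; apply: rank1_psd.
Qed.
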